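(* For any path $\mathcal P$, every function $F_{\mathcal P}$ constructed by Algorithm 1 is well defined: if two sets $\{p_1,\dots,p_m\},\{q_1,\dots,q_k\}\subseteq\mathcal B_{\mathcal P}$ satisfy $\bigoplus_i\vec\alpha^{p_i}=\bigoplus_j\vec\alpha^{q_j}$ on $\mathrm{Conn}(\mathcal P)$, then for every class representative $\vec i$ the values assigned by the algorithm to $\vec i\oplus\bigoplus_i\vec\alpha^{p_i}$ and to $\vec i\oplus\bigoplus_j\vec\alpha^{q_j}$ coincide, and the assigned value does not depend on the order in which plaquettes or subsets are processed.
   Context: Let $\Lambda$ be a hexagonal (honeycomb) lattice embedded in a closed orientable surface, with one qubit on each edge. For an edge $j$, $\sigma^x_j,\sigma^z_j$ denote the Pauli operators on qubit $j$ and $n^{\pm}_j=\tfrac12(1\pm\sigma^z_j)$. A (string) configuration $\vec i$ is a computational basis state, viewed as a bit string assigning $0$ (empty) or $1$ (occupied) to each edge; $\vec i\oplus\vec\alpha$ is bitwise addition mod 2. For a hexagonal plaquette $p$, label its boundary edges $1,\dots,6$ cyclically (index $0$ means $6$) and its outgoing edges so that edge $12$ meets edges $6,1$; edge $7$ meets $1,2$; edge $8$ meets $2,3$; edge $9$ meets $3,4$; edge $10$ meets $4,5$; edge $11$ meets $5,6$. Define $B_p=\Big(\prod_{j=1}^6\sigma^x_j\Big)\Big(\prod_{j=1}^6(-1)^{n^-_{j-1}n^+_j}\Big)\,i^{n^-_{12}(n^-_1n^-_6-n^+_1n^+_6)}\,i^{n^-_7(n^+_1n^+_2-n^-_1n^-_2)}\,i^{n^+_8(n^-_2n^+_3-n^+_2n^-_3)}\,i^{n^-_9(n^-_3n^-_4-n^+_3n^+_4)}\,i^{n^-_{10}(n^+_4n^+_5-n^-_4n^-_5)}\,i^{n^+_{11}(n^-_5n^+_6-n^+_5n^-_6)}$;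 all $B_p$ commute pairwise and square to the identity. Write $B_p=\prod_{j\in\partial p}\sigma^x_j\sum_{\vec i}b_p(\vec i)|\vec i\rangle\langle\vec i|$, defining the phase $b_p(\vec i)$. Let $\vec\alpha^p$ be the configuration occupied exactly on the boundary edges of $p$. A path $\mathcal P$ is a sequence of edges forming a walk; $\vec\alpha^{\mathcal P}$ is the mod-2 sum of the indicators of its edges. $\mathrm{Conn}(\mathcal P)$ is the set of edges of $\mathcal P$ together with all edges sharing a vertex with an edge of $\mathcal P$; $\mathcal B_{\mathcal P}$ is the set of plaquettes with at least one boundary edge in $\mathrm{Conn}(\mathcal P)$. Define $\theta_{\mathcal P}(\vec i,p_1,\dots,p_m)=\prod_{k=1}^m \frac{b_{p_k}(\vec i\oplus\vec\alpha^{\mathcal P}\oplus\bigoplus_{j<k}\vec\alpha^{p_j})}{b_{p_k}(\vec i\oplus\bigoplus_{j<k}\vec\alpha^{p_j})}$ (a configuration on $\mathrm{Conn}(\mathcal P)$ being extended arbitrarily to the whole lattice). The configuration class of $\vec i$ on $\mathrm{Conn}(\mathcal P)$ is $\mathcal C_{\mathcal P}(\vec i)=\{\vec i\oplus\bigoplus_{p\in S}\vec\alpha^p|_{\mathrm{Conn}(\mathcal P)}:S\subseteq\mathcal B_{\mathcal P}\}$. Algorithm 1: for each configuration class pick a representative $\vec i$, set $F_{\mathcal P}(\vec i)$ to an arbitrary unit complex number, and for every subset $\{p_1,\dots,p_m\}\subseteq\mathcal B_{\mathcal P}$ set $F_{\mathcal P}(\vec i\oplus\bigoplus_k\vec\alpha^{p_k})=\theta_{\mathcal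 P}(\vec i,p_1,\dots,p_m)F_{\mathcal P}(\vec i)$. *)

(* Defs.v *)
From HB Require Import structures.
From mathcomp Require Import all_boot all_order all_algebra all_field.
Set Implicit Arguments. Unset Strict Implicit. Unset Printing Implicit Defensive.
Import GRing.Theory Num.Theory.
Local Open Scope ring_scope.

(* The lattice.  A honeycomb (hexagonal) lattice cellularly embedded in a     *)
(* closed orientable surface is necessarily a torus (Euler characteristic     *)
(* V - E + F = V - 3V/2 + V/2 = 0), namely the quotient of the planar         *)
(* honeycomb by a rank-2 sublattice of its translation lattice Z^2.  We       *)
(* describe it by the finite abelian group G = Z^2 / Lambda of unit cells     *)
(* together with the images a1, a2 of the two unit translations (which must  *)
(* generate G, i.e. the surface is connected).                                *)
(*   Each cell c carries two vertices (c, false) ("A") and (c, true) ("B"),   *)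
(* three edges (c, t), t : 'I_3, and one hexagonal plaquette (named c).       *)
(* Edge (c, t) joins A-vertex (c, false) to B-vertex (c - d_t, true), where   *)
(* d_0 = 0, d_1 = a1, d_2 = a2.                                               *)
Section Honeycomb.
Variables (G : finZmodType) (a1 a2 : G).

Definition edge := (G * 'I_3)%type.
Definition vertex := (G * bool)%type.
Definition config := edge -> bool.   (* string configuration: 1 = occupied *)

Definition edir (t : 'I_3) : G :=
  match val t with O => 0 | S O => a1 | _ => a2 end.

Definition vA (e : edge) : vertex := (e.1, false).
Definition vB (e : edge) : vertex := (e.1 - edir e.2, true).

Definition share_vertex (e f : edge) : bool :=
  [|| vA e == vA f, vA e == vB f, vB e == vA f | vB e == vB f].

Definition other_end (v : vertex) (e : edge) : vertex :=
  if v == vA e then vB e else vA e.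

Fixpoint is_walk (v : vertex) (P : seq edge) : bool :=
  match P with
  | [::] => true
  | e :: P' => ((v == vA e) || (v == vB e)) && is_walk (other_end v e) P'
  end.

Definition is_path (P : seq edge) : Prop := exists v, is_walk v P.

Definition mkE (c : G) (t : nat) : edge := (c, inord t).

(* Boundary edges of plaquette p, in geometric cyclic order k = 0..5 *)
Definition bgeo (p : G) (k : nat) : edge :=
  match (k %% 6)%N with
  | O => mkE p 0%N
  | 1%N => mkE (p + a1) 1%N
  | 2%N => mkE (p + a1) 2%N
  | 3%N => mkE (p + a1 - a2) 0%N
  | 4%N => mkE (p + a1 - a2) 1%N
  | _ => mkE p 2%N
  end.

(* Outgoing edge at the vertex shared by bgeo p k and bgeo p (k+1) *)
Definition ogeo (p : G) (k : nat) : edge :=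
  match (k %% 6)%N with
  | O => mkE (p + a2) 2%N
  | 1%N => mkE (p + a1) 0%N
  | 2%N => mkE (p + a1 *+ 2 - a2) 1%N
  | 3%N => mkE (p + a1 - a2) 2%N
  | 4%N => mkE (p - a2) 0%N
  | _ => mkE p 1%N
  end.

(* the lattice is a genuine hexagonal lattice: the 6 boundary and 6
   outgoing edges of each plaquette are 12 distinct edges *)
Definition honeycomb_nondeg : Prop :=
  forall p : G, uniq ([seq bgeo p k | k <- iota 0 6] ++ [seq ogeo p k | k <- iota 0 6]).

(* Labelling of each plaquette (same convention for all plaquettes, i.e.     *)
(* translation invariant): boundary label 1 is geometric edge s, and labels  *)
(* run in direction d (false: increasing k, true: decreasing k).             *)
Variables (s : 'I_6) (d : bool).

Definition kidx (j : nat) : nat := if d then (s + 5 * j)%N else (s + j)%N.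

(* boundary edge with label j in 1..6 (label 0 means 6) *)
Definition bnd (p : G) (j : nat) : edge := bgeo p (kidx (j + 5)).

(* outgoing edge with label l in 7..12: label 7 + j' (j' = 0..4) meets
   boundary labels j'+1, j'+2; label 12 meets labels 6 and 1 *)
Definition outl (p : G) (l : nat) : edge :=
  let j := ((l + 5) %% 6)%N in ogeo p (if d then kidx j.+1 else kidx j).

Definition bnds (p : G) : seq edge := [seq bnd p j | j <- iota 1 6].

(* n^-_e = 1 iff e occupied, n^+_e = 1 iff e empty *)
Definition nm (i : config) (e : edge) : int := (i e : nat)%:Z.
Definition np (i : config) (e : edge) : int := ((~~ i e) : nat)%:Z.

(* the phase b_p(i) of B_p = prod_{j in dp} sigma^x_j  sum_i b_p(i)|i><i| *)
Definition bphase (p : G) (i : config) : algC :=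
  let m j := nm i (bnd p j) in let pl j := np i (bnd p j) in
  let om l := nm i (outl p l) in let op l := np i (outl p l) in
  let sg : int := \sum_(1 <= j < 7) m (j.-1) * pl j in
  let ex : int :=
      om 12 * (m 1 * m 6 - pl 1 * pl 6)
    + om 7  * (pl 1 * pl 2 - m 1 * m 2)
    + op 8  * (m 2 * pl 3 - pl 2 * m 3)
    + om 9  * (m 3 * m 4 - pl 3 * pl 4)
    + om 10 * (pl 4 * pl 5 - m 4 * m 5)
    + op 11 * (m 5 * pl 6 - pl 5 * m 6) in
  (-1) ^ sg * 'i ^ ex.

Definition cadd (i a : config) : config := fun e => i e (+) a e.

Definition alpha_p (p : G) : config := fun e => e \in bnds p.

Definition alpha_path (P : seq edge) : config := fun e => odd (count_mem e P).

Definition plaqsum (t : seq G) : config :=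
  fun e => odd (count (fun q => alpha_p q e) t).

Definition inConn (P : seq edge) (e : edge) : bool :=
  has (fun f => (f == e) || share_vertex f e) P.
Definition inBP (P : seq edge) (p : G) : bool := has (inConn P) (bnds p).

Definition thetaP (P : seq edge) (i : config) (ps : seq G) : algC :=
  \prod_(k < size ps)
     (bphase (nth 0 ps k) (cadd (cadd i (alpha_path P)) (plaqsum (take k ps)))
      / bphase (nth 0 ps k) (cadd i (plaqsum (take k ps)))).

End Honeycomb.

(* Main.v *)
Require Import Defs.
From HB Require Import structures.
From mathcomp Require Import all_boot all_order all_algebra all_field.
Require Import Defs.
From Stdlib Require Import FunctionalExtensionality.
From mathcomp Require Import zify ring.
Import GRing.Theory Num.Theory.
Local Open Scope ring_scope.
Definition vec := (int * int)%type.
Definition sym := (vec * nat)%type.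
Definition vadd (u w : vec) : vec := (u.1 + w.1, u.2 + w.2).
Definition vsub (u w : vec) : vec := (u.1 - w.1, u.2 - w.2).
Definition vneg (u : vec) : vec := (- u.1, - u.2).
Definition boff (n : nat) : vec :=
  match n with 0%N => (0,0) | 1%N => (1,0) | 2%N => (1,0) | 3%N => (1,-1) | 4%N => (1,-1) | _ => (0,0) end.
Definition btyp (n : nat) : nat :=
  match n with 0%N => 0%N | 1%N => 1%N | 2%N => 2%N | 3%N => 0%N | 4%N => 1%N | _ => 2%N end.
Definition ooff (n : nat) : vec :=
  match n with 0%N => (0,1) | 1%N => (1,0) | 2%N => (2,-1) | 3%N => (1,-1) | 4%N => (0,-1) | _ => (0,0) end.
Definition otyp (n : nat) : nat :=
  match n with 0%N => 2%N | 1%N => 0%N | 2%N => 1%N | 3%N => 2%N | 4%N => 0%N | _ => 1%N end.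
Definition dirv (t : nat) : vec := match t with 0%N => (0,0) | 1%N => (1,0) | _ => (0,1) end.

Definition skidx (s : nat) (d : bool) (j : nat) : nat := if d then (s + 5 * j)%N else (s + j)%N.
Definition sbnd s d (v : vec) (L : nat) : sym :=
  let n := (skidx s d (L + 5) %% 6)%N in (vadd v (boff n), btyp n).
Definition soutl s d (v : vec) (l : nat) : sym :=
  let j := ((l + 5) %% 6)%N in
  let n := ((if d then skidx s d j.+1 else skidx s d j) %% 6)%N in (vadd v (ooff n), otyp n).

Definition Eexp (f h : nat -> bool) : int :=
  let m j := ((f j : nat))%:Z in let pl j := ((~~ f j : nat))%:Z in
  let om l := ((h l : nat))%:Z in let op l := ((~~ h l : nat))%:Z in
  let sg : int := m 0%N * pl 1%N + (m 1%N * pl 2%N + (m 2%N * pl 3%N + (m 3%N * pl 4%N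
                   + (m 4%N * pl 5%N + (m 5%N * pl 6%N + 0))))) in
  let ex : int :=
      om 12%N * (m 1%N * m 6%N - pl 1%N * pl 6%N)
    + om 7%N  * (pl 1%N * pl 2%N - m 1%N * m 2%N)
    + op 8%N  * (m 2%N * pl 3%N - pl 2%N * m 3%N)
    + om 9%N  * (m 3%N * m 4%N - pl 3%N * pl 4%N)
    + om 10%N * (pl 4%N * pl 5%N - m 4%N * m 5%N)
    + op 11%N * (m 5%N * pl 6%N - pl 5%N * m 6%N) in
  2 * sg + ex.

Definition EexpL (bs os : seq bool) : int :=
  Eexp (fun j => nth false bs (if j is j'.+1 then j' else 5%N)) (fun l => nth false os l.-1.-1.-1.-1.-1.-1.-1).

Definition esym (t : nat) : sym := ((0,0), t).
Definition Csym (t : nat) : seq sym :=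
  esym t :: map (fun tt : nat => ((0,0) : vec, tt)) (filter (fun tt : nat => tt != t) (iota 0 3))
         ++ map (fun tt : nat => (vadd (vneg (dirv t)) (dirv tt), tt)) (filter (fun tt : nat => tt != t) (iota 0 3)).
Definition Qs (t : nat) : seq vec :=
  map (fun n => vneg (boff n)) (filter (fun n => btyp n == t) (iota 0 6))
  ++ map (fun n => vneg (ooff n)) (filter (fun n => otyp n == t) (iota 0 6)).

Definition tables : seq (seq nat) := [::
  [:: 0; 0; 1; 0; 0; 0; 1; 0; 1; 1; 2; 1; 0; 0; 1; 0; 3; 1; 0; 3; 1; 3; 2; 1; 0; 2; 1; 0; 3; 1; 0; 3];
  [:: 0; 0; 0; 3; 0; 0; 0; 3; 0; 0; 0; 3; 3; 3; 3; 2; 3; 1; 1; 0; 1; 3; 3; 2; 1; 3; 3; 2; 0; 2; 2; 1];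
  [:: 0; 0; 0; 1; 0; 0; 0; 1; 0; 0; 0; 1; 1; 1; 1; 2; 1; 3; 3; 0; 3; 1; 1; 2; 3; 1; 1; 2; 0; 2; 2; 3];
  [:: 0; 0; 3; 0; 0; 0; 3; 0; 3; 3; 2; 3; 0; 0; 3; 0; 1; 3; 0; 1; 3; 1; 2; 3; 0; 2; 3; 0; 1; 3; 0; 1];
  [:: 0; 0; 0; 1; 0; 0; 0; 1; 0; 0; 0; 1; 1; 1; 1; 2; 1; 3; 3; 0; 3; 1; 1; 2; 3; 1; 1; 2; 0; 2; 2; 3];
  [:: 0; 0; 0; 3; 0; 0; 0; 3; 0; 0; 0; 3; 3; 3; 3; 2; 3; 1; 1; 0; 1; 3; 3; 2; 1; 3; 3; 2; 0; 2; 2; 1];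
  [:: 0; 0; 0; 1; 0; 0; 0; 1; 0; 0; 0; 1; 1; 1; 1; 2; 1; 3; 3; 0; 3; 1; 1; 2; 3; 1; 1; 2; 0; 2; 2; 3];
  [:: 0; 0; 3; 0; 0; 0; 3; 0; 3; 3; 2; 3; 0; 0; 3; 0; 1; 3; 0; 1; 3; 1; 2; 3; 0; 2; 3; 0; 1; 3; 0; 1];
  [:: 0; 0; 0; 3; 0; 0; 0; 3; 0; 0; 0; 3; 3; 3; 3; 2; 3; 1; 1; 0; 1; 3; 3; 2; 1; 3; 3; 2; 0; 2; 2; 1];
  [:: 0; 0; 0; 3; 0; 0; 0; 3; 0; 0; 0; 3; 3; 3; 3; 2; 3; 1; 1; 0; 1; 3; 3; 2; 1; 3; 3; 2; 0; 2; 2; 1];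
  [:: 0; 0; 1; 0; 0; 0; 1; 0; 1; 1; 2; 1; 0; 0; 1; 0; 3; 1; 0; 3; 1; 3; 2; 1; 0; 2; 1; 0; 3; 1; 0; 3];
  [:: 0; 0; 0; 1; 0; 0; 0; 1; 0; 0; 0; 1; 1; 1; 1; 2; 1; 3; 3; 0; 3; 1; 1; 2; 3; 1; 1; 2; 0; 2; 2; 3];
  [:: 0; 0; 0; 3; 0; 0; 0; 3; 0; 0; 0; 3; 3; 3; 3; 2; 3; 1; 1; 0; 1; 3; 3; 2; 1; 3; 3; 2; 0; 2; 2; 1];
  [:: 0; 0; 0; 1; 0; 0; 0; 1; 0; 0; 0; 1; 1; 1; 1; 2; 1; 3; 3; 0; 3; 1; 1; 2; 3; 1; 1; 2; 0; 2; 2; 3];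
  [:: 0; 0; 1; 0; 0; 0; 1; 0; 1; 1; 2; 1; 0; 0; 1; 0; 3; 1; 0; 3; 1; 3; 2; 1; 0; 2; 1; 0; 3; 1; 0; 3];
  [:: 0; 0; 0; 1; 0; 0; 0; 1; 0; 0; 0; 1; 1; 1; 1; 2; 1; 3; 3; 0; 3; 1; 1; 2; 3; 1; 1; 2; 0; 2; 2; 3];
  [:: 0; 0; 0; 3; 0; 0; 0; 3; 0; 0; 0; 3; 3; 3; 3; 2; 3; 1; 1; 0; 1; 3; 3; 2; 1; 3; 3; 2; 0; 2; 2; 1];
  [:: 0; 0; 3; 0; 0; 0; 3; 0; 3; 3; 2; 3; 0; 0; 3; 0; 1; 3; 0; 1; 3; 1; 2; 3; 0; 2; 3; 0; 1; 3; 0; 1];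
  [:: 0; 0; 1; 0; 0; 0; 1; 0; 1; 1; 2; 1; 0; 0; 1; 0; 3; 1; 0; 3; 1; 3; 2; 1; 0; 2; 1; 0; 3; 1; 0; 3];
  [:: 0; 0; 0; 3; 0; 0; 0; 3; 0; 0; 0; 3; 3; 3; 3; 2; 3; 1; 1; 0; 1; 3; 3; 2; 1; 3; 3; 2; 0; 2; 2; 1];
  [:: 0; 0; 0; 1; 0; 0; 0; 1; 0; 0; 0; 1; 1; 1; 1; 2; 1; 3; 3; 0; 3; 1; 1; 2; 3; 1; 1; 2; 0; 2; 2; 3];
  [:: 0; 0; 3; 0; 0; 0; 3; 0; 3; 3; 2; 3; 0; 0; 3; 0; 1; 3; 0; 1; 3; 1; 2; 3; 0; 2; 3; 0; 1; 3; 0; 1];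
  [:: 0; 0; 0; 1; 0; 0; 0; 1; 0; 0; 0; 1; 1; 1; 1; 2; 1; 3; 3; 0; 3; 1; 1; 2; 3; 1; 1; 2; 0; 2; 2; 3];
  [:: 0; 0; 0; 3; 0; 0; 0; 3; 0; 0; 0; 3; 3; 3; 3; 2; 3; 1; 1; 0; 1; 3; 3; 2; 1; 3; 3; 2; 0; 2; 2; 1];
  [:: 0; 0; 0; 1; 0; 0; 0; 1; 0; 0; 0; 1; 1; 1; 1; 2; 1; 3; 3; 0; 3; 1; 1; 2; 3; 1; 1; 2; 0; 2; 2; 3];
  [:: 0; 0; 3; 0; 0; 0; 3; 0; 3; 3; 2; 3; 0; 0; 3; 0; 1; 3; 0; 1; 3; 1; 2; 3; 0; 2; 3; 0; 1; 3; 0; 1];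
  [:: 0; 0; 0; 3; 0; 0; 0; 3; 0; 0; 0; 3; 3; 3; 3; 2; 3; 1; 1; 0; 1; 3; 3; 2; 1; 3; 3; 2; 0; 2; 2; 1];
  [:: 0; 0; 0; 3; 0; 0; 0; 3; 0; 0; 0; 3; 3; 3; 3; 2; 3; 1; 1; 0; 1; 3; 3; 2; 1; 3; 3; 2; 0; 2; 2; 1];
  [:: 0; 0; 1; 0; 0; 0; 1; 0; 1; 1; 2; 1; 0; 0; 1; 0; 3; 1; 0; 3; 1; 3; 2; 1; 0; 2; 1; 0; 3; 1; 0; 3];
  [:: 0; 0; 0; 1; 0; 0; 0; 1; 0; 0; 0; 1; 1; 1; 1; 2; 1; 3; 3; 0; 3; 1; 1; 2; 3; 1; 1; 2; 0; 2; 2; 3];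
  [:: 0; 0; 0; 3; 0; 0; 0; 3; 0; 0; 0; 3; 3; 3; 3; 2; 3; 1; 1; 0; 1; 3; 3; 2; 1; 3; 3; 2; 0; 2; 2; 1];
  [:: 0; 0; 0; 1; 0; 0; 0; 1; 0; 0; 0; 1; 1; 1; 1; 2; 1; 3; 3; 0; 3; 1; 1; 2; 3; 1; 1; 2; 0; 2; 2; 3];
  [:: 0; 0; 1; 0; 0; 0; 1; 0; 1; 1; 2; 1; 0; 0; 1; 0; 3; 1; 0; 3; 1; 3; 2; 1; 0; 2; 1; 0; 3; 1; 0; 3];
  [:: 0; 0; 0; 1; 0; 0; 0; 1; 0; 0; 0; 1; 1; 1; 1; 2; 1; 3; 3; 0; 3; 1; 1; 2; 3; 1; 1; 2; 0; 2; 2; 3];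
  [:: 0; 0; 0; 3; 0; 0; 0; 3; 0; 0; 0; 3; 3; 3; 3; 2; 3; 1; 1; 0; 1; 3; 3; 2; 1; 3; 3; 2; 0; 2; 2; 1];
  [:: 0; 0; 3; 0; 0; 0; 3; 0; 3; 3; 2; 3; 0; 0; 3; 0; 1; 3; 0; 1; 3; 1; 2; 3; 0; 2; 3; 0; 1; 3; 0; 1]].


Definition bidx (bs : seq bool) : nat := foldl (fun acc (b : bool) => (acc.*2 + b)%N) 0%N bs.
Definition Fnat (s : nat) (d : bool) (t : nat) (bs : seq bool) : nat :=
  nth 0%N (nth [::] tables (s * 6 + (if d then 3 else 0) + t)%N) (bidx bs).

Definition xorl (a b : seq bool) : seq bool := [seq x.1 (+) x.2 | x <- zip a b].
Fixpoint all_bits (n : nat) : seq (seq bool) :=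
  match n with 0%N => [:: [::]] | n.+1 => [seq b :: x | b <- [:: false; true], x <- all_bits n] end.

Definition NsymL s d v := [seq sbnd s d v L | L <- iota 1 6].
Definition OsymL s d v := [seq soutl s d v l | l <- iota 7 6].
Definition VarsL s d t v := undup (NsymL s d v ++ OsymL s d v ++ Csym t).

Definition nbtab : seq (seq bool) := [::
  [:: true; true; false; false; false; true; true; false; false; false; false; true];
  [:: true; true; true; false; false; false; true; true; false; false; false; false];
  [:: false; true; true; true; false; false; false; true; true; false; false; false];
  [:: false; false; true; true; true; false; false; false; true; true; false; false];
  [:: false; false; false; true; true; true; false; false; false; true; true; false];
  [:: true; false; false; false; true; true; false; false; false; false; true; true];
  [:: true; true; false; false; false; false; true; false; false; false; false; false];
  [:: false; true; true; false; false; false; false; true; false; false; false; false];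
  [:: false; false; true; true; false; false; false; false; true; false; false; false];
  [:: false; false; false; true; true; false; false; false; false; true; false; false];
  [:: false; false; false; false; true; true; false; false; false; false; true; false];
  [:: true; false; false; false; false; true; false; false; false; false; false; true]].

Definition nbm (k : nat) : seq bool := nth [::] nbtab k.

Definition Dexp (N O : seq sym) (es : sym) (rho : sym -> bool) : int :=
  EexpL (map (fun u => rho u (+) (es == u)) N) (map (fun u => rho u (+) (es == u)) O)
  - EexpL (map rho N) (map rho O).
Definition rhox (Cs : seq sym) (x : seq bool) (u : sym) : bool :=
  if u \in Cs then nth false x (index u Cs) else false.

Definition chkB s d t v : bool :=
  let N := NsymL s d v in let O := OsymL s d v in let Cs := Csym t in let es := esym t in
  let k := index es (N ++ O) in
  [&& (k < 12)%N, [seq es == u | u <- N ++ O] == [seq i == k | i <- iota 0 12],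
      all (fun i => nth false (nbm k) i ==> (nth es (N ++ O) i \in Cs)) (iota 0 12) &
      all (fun x => ((Dexp N O es (rhox Cs x)
                     - ((Fnat s d t (map (fun c => rhox Cs x c (+) (c \in N)) Cs))%:Z
                        - (Fnat s d t (map (rhox Cs x) Cs))%:Z)) %% 4 == 0)%Z)
          (all_bits (size Cs))].

Definition allchkB : bool :=
  all (fun s => all (fun d => all (fun t => all (fun v => chkB s d t v) (Qs t)) (iota 0 3))
     [:: false; true]) (iota 0 6).

Lemma all_bitsP (b : seq bool) : b \in all_bits (size b).
Proof.
elim: b => [|x b IH] //=.
have Hx : x \in [:: false; true] by case: x.
exact: (allpairs_f (fun (y : bool) (z : seq bool) => y :: z) Hx IH).
Qed.

Lemma xorl_map (T : Type) (f g : T -> bool) (s : seq T) :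
  xorl (map f s) (map g s) = map (fun x => f x (+) g x) s.
Proof. rewrite /xorl; by elim: s => //= x s ->. Qed.

Lemma i4 : 'i ^+ 4 = 1 :> algC.
Proof. by rewrite (exprM _ 2 2) sqrCi expr2 mulrNN mulr1. Qed.

Lemma iN4 n : 'i ^+ n = 'i ^+ (n %% 4) :> algC.
Proof. by rewrite {1}(divn_eq n 4) exprD mulnC exprM i4 expr1n mul1r. Qed.

Lemma iZ4 (z : int) : 'i ^ z = 'i ^ ((z %% 4)%Z) :> algC.
Proof.
rewrite {1}(divz_eq z 4) exprzDr ?unitfE ?neq0Ci // [((_ %/ 4)%Z * 4)%R]mulrC -exprz_exp.
rewrite [X in X ^ (z %/ 4)%Z](_ : _ = 1); first by rewrite exp1rz mul1r.
change ('i ^+ 4 = 1 :> algC); exact: i4.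
Qed.

Lemma allchkB_ok : allchkB.
Proof. vm_compute. reflexivity. Qed.

Lemma loc k (bs os : seq bool) : (k < 12)%N -> size bs = 6%N -> size os = 6%N ->
  EexpL (xorl bs [seq i == k | i <- iota 0 6]) (xorl os [seq i == k | i <- iota 6 6]) - EexpL bs os =
  EexpL (xorl [seq nth false (nbm k) i && nth false bs i | i <- iota 0 6] [seq i == k | i <- iota 0 6]) (xorl [seq nth false (drop 6 (nbm k)) i && nth false os i | i <- iota 0 6] [seq i == k | i <- iota 6 6]) - EexpL [seq nth false (nbm k) i && nth false bs i | i <- iota 0 6] [seq nth false (drop 6 (nbm k)) i && nth false os i | i <- iota 0 6].
Proof.
move=> hk.
case: bs => [|b0 [|b1 [|b2 [|b3 [|b4 [|b5 [|]]]]]]] //.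
case: os => [|o0 [|o1 [|o2 [|o3 [|o4 [|o5 [|]]]]]]] // _ _.
do 12! (case: k hk => [|k] hk; [rewrite /EexpL /Eexp /xorl /nbm /= ?addbT ?addbF ?negbK; ring|]).
by [].
Qed.

Lemma chkB_sound s d t v (rho : sym -> bool) : chkB s d t v ->
  ((Dexp (NsymL s d v) (OsymL s d v) (esym t) rho
    - ((Fnat s d t (map (fun c => rho c (+) (c \in NsymL s d v)) (Csym t)))%:Z
       - (Fnat s d t (map rho (Csym t)))%:Z)) %% 4 == 0)%Z.
Proof.
set N := NsymL s d v; set O := OsymL s d v; set Cs := Csym t; set es := esym t.
case/and4P => hk /eqP hm /allP hn /allP hx.
set k := index es (N ++ O) in hk hm hn hx.
have sN : size N = 6%N by rewrite size_map size_iota.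
have sO : size O = 6%N by rewrite size_map size_iota.
pose x := map rho Cs.
have Hrx : forall c, c \in Cs -> rhox Cs x c = rho c.
  by move=> c cC; rewrite /rhox cC (nth_map c) ?index_mem // nth_index.
have E1 : map rho Cs = map (rhox Cs x) Cs by apply/eq_in_map => c /Hrx ->.
have E2 : map (fun c => rho c (+) (c \in N)) Cs = map (fun c => rhox Cs x c (+) (c \in N)) Cs.
  by apply/eq_in_map => c /Hrx ->.
have hmN : [seq es == u | u <- N] = [seq i == k | i <- iota 0 6].
  move: hm; rewrite map_cat (iotaD 0 6 6) map_cat => /eqP; rewrite eqseq_cat.
    by case/andP => /eqP.
  by rewrite !size_map size_iota.
have hmO : [seq es == u | u <- O] = [seq i == k | i <- iota 6 6].
  move: hm; rewrite map_cat (iotaD 0 6 6) map_cat => /eqP; rewrite eqseq_cat.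
    by case/andP => _ /eqP.
  by rewrite !size_map size_iota.
have DE : forall r, Dexp N O es r =
   EexpL (xorl [seq nth false (nbm k) i && nth false (map r N) i | i <- iota 0 6] [seq i == k | i <- iota 0 6])
         (xorl [seq nth false (drop 6 (nbm k)) i && nth false (map r O) i | i <- iota 0 6] [seq i == k | i <- iota 6 6])
   - EexpL [seq nth false (nbm k) i && nth false (map r N) i | i <- iota 0 6]
           [seq nth false (drop 6 (nbm k)) i && nth false (map r O) i | i <- iota 0 6].
  move=> r; rewrite /Dexp -(loc _ _ _ hk) ?size_map //.
  by rewrite -hmN -hmO !xorl_map.
have L1 : [seq nth false (nbm k) i && nth false (map rho N) i | i <- iota 0 6]
        = [seq nth false (nbm k) i && nth false (map (rhox Cs x) N) i | i <- iota 0 6].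
  apply/eq_in_map => i; rewrite mem_iota add0n => /andP[_ i6].
  case Hi : (nth false (nbm k) i) => //; rewrite !andTb.
  have Hi12 : i \in iota 0 12 by rewrite mem_iota add0n (leq_trans i6).
  have := implyP (hn i Hi12) Hi; rewrite nth_cat sN i6 => iC.
  by rewrite !(nth_map es) ?sN // Hrx.
have L2 : [seq nth false (drop 6 (nbm k)) i && nth false (map rho O) i | i <- iota 0 6]
        = [seq nth false (drop 6 (nbm k)) i && nth false (map (rhox Cs x) O) i | i <- iota 0 6].
  apply/eq_in_map => i; rewrite mem_iota add0n => /andP[_ i6].
  case Hi : (nth false (drop 6 (nbm k)) i) => //; rewrite !andTb.
  rewrite nth_drop in Hi.
  have Hi12 : (6 + i)%N \in iota 0 12 by rewrite mem_iota add0n -[12%N]/(6 + 6)%N ltn_add2l i6.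
  have iC : nth es O i \in Cs.
    by have := implyP (hn _ Hi12) Hi; rewrite nth_cat sN ltnNge leq_addr addKn.
  by rewrite !(nth_map es) ?sO // Hrx.
have E3 : Dexp N O es rho = Dexp N O es (rhox Cs x) by rewrite [LHS]DE [RHS]DE L1 L2.
rewrite E1 E2 E3; apply: hx.
rewrite -(size_map rho); exact: all_bitsP.
Qed.

Lemma mod4_mul (A A' : int) (f f' : nat) :
  ((A' - A - (f'%:Z - f%:Z)) %% 4 == 0)%Z -> 'i ^ A' * 'i ^+ f = 'i ^ A * 'i ^+ f' :> algC.
Proof.
move=> /eqP /dvdz_mod0P H.
have -> : 'i ^+ f = 'i ^ (f%:Z) :> algC by [].
have -> : 'i ^+ f' = 'i ^ (f'%:Z) :> algC by [].
rewrite -!exprzDr ?unitfE ?neq0Ci // iZ4 [RHS]iZ4; congr ('i ^ _).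
apply/eqP; rewrite eqz_mod_dvd.
have -> : A' + f%:Z - (A + f'%:Z) = A' - A - (f'%:Z - f%:Z) by ring.
exact: H.
Qed.


Section Geo.
Variables (G : finZmodType) (a1 a2 : G).

Definition phi (u : vec) : G := a1 *~ u.1 + a2 *~ u.2.
Definition eval (g : G) (u : sym) : edge G := (g + phi u.1, inord u.2).

Lemma phiD u w : phi (vadd u w) = phi u + phi w.
Proof. by rewrite /phi /vadd /= !mulrzDr addrACA. Qed.
Lemma phiN u : phi (vneg u) = - phi u.
Proof. by rewrite /phi /vneg /= !mulrNz opprD. Qed.
Lemma phiB u w : phi (vsub u w) = phi u - phi w.
Proof. by rewrite -phiN -phiD. Qed.

Lemma bgeoE p k : bgeo a1 a2 p k = (p + phi (boff (k %% 6)), inord (btyp (k %% 6))).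
Proof.
rewrite /bgeo /mkE /phi; case: (k %% 6)%N => [|[|[|[|[|n]]]]] /=; congr pair;
  by rewrite ?mulr0z ?mulr1z ?mulrN1z ?addr0 ?addrA.
Qed.

Lemma ogeoE p k : ogeo a1 a2 p k = (p + phi (ooff (k %% 6)), inord (otyp (k %% 6))).
Proof.
rewrite /ogeo /mkE /phi; case: (k %% 6)%N => [|[|[|[|[|n]]]]] /=; congr pair;
  by rewrite ?mulr0z ?mulr1z ?mulrN1z ?mulrz_nat ?addr0 ?add0r ?addrA.
Qed.

Variables (s : 'I_6) (d : bool).

Lemma bndE p L : bnd a1 a2 s d p L =
  (p + phi (boff (skidx s d (L + 5) %% 6)), inord (btyp (skidx s d (L + 5) %% 6))).
Proof. by rewrite /bnd bgeoE. Qed.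

Lemma outlE p l : outl a1 a2 s d p l =
  let j := ((l + 5) %% 6)%N in
  let n := ((if d then skidx s d j.+1 else skidx s d j) %% 6)%N in
  (p + phi (ooff n), inord (otyp n)).
Proof. by rewrite /outl ogeoE. Qed.

Lemma bnd_sym g v L : bnd a1 a2 s d (g + phi v) L = eval g (sbnd s d v L).
Proof. by rewrite bndE /eval /sbnd -addrA -phiD. Qed.

Lemma outl_sym g v l : outl a1 a2 s d (g + phi v) l = eval g (soutl s d v l).
Proof. by rewrite outlE /eval /soutl -addrA -phiD. Qed.

Lemma bnd06 p : bnd a1 a2 s d p 0 = bnd a1 a2 s d p 6.
Proof.
have E : (skidx s d (0 + 5) %% 6 = skidx s d (6 + 5) %% 6)%N.
  by rewrite /skidx; case: d; lia.
by rewrite !bndE E.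
Qed.

Lemma bphaseE p i : bphase a1 a2 s d p i =
  'i ^ (Eexp (fun L => i (bnd a1 a2 s d p L)) (fun l => i (outl a1 a2 s d p l))).
Proof.
rewrite /bphase /Eexp unlock /=.
rewrite [in RHS]exprzDr ?unitfE ?neq0Ci // -exprz_exp.
congr (_ ^ _ * _ ^ _); by rewrite -sqrCi.
Qed.

Lemma bphaseN p i : bphase a1 a2 s d p i =
  'i ^ EexpL (map (fun L => i (bnd a1 a2 s d p L)) (iota 1 6))
             (map (fun l => i (outl a1 a2 s d p l)) (iota 7 6)).
Proof.
rewrite bphaseE.
by rewrite /EexpL /Eexp /= bnd06.
Qed.

End Geo.

Definition L12 : seq sym :=
  [seq (boff k, btyp k) | k <- iota 0 6] ++ [seq (ooff k, otyp k) | k <- iota 0 6].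
Definition NZ : seq vec :=
  [seq vsub x.1.1 x.2.1 | x <- filter (fun x : sym * sym => (x.1 != x.2) && (x.1.2 == x.2.2))
                                       [seq (u, w) | u <- L12, w <- L12]].
Definition sdec (u w : sym) : bool :=
  [|| u == w, (u.2 != w.2) && (u.2 < 3)%N && (w.2 < 3)%N | vsub u.1 w.1 \in NZ].
Definition sdchk s d t v : bool :=
  all (fun u => sdec (esym t) u) (NsymL s d v ++ OsymL s d v)
  && all (fun c => all (sdec c) (NsymL s d v)) (Csym t).
Definition qchk t : bool :=
  all (fun c => (c.2 < 3)%N && all (fun n => (btyp n == c.2) ==> (vsub c.1 (boff n) \in Qs t)) (iota 0 6))
      (Csym t).
Definition svA (u : sym) : vec * bool := (u.1, false).
Definition svB (u : sym) : vec * bool := (vsub u.1 (dirv u.2), true).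
Definition svsh (u w : sym) : bool :=
  [|| svA u == svA w, svA u == svB w, svB u == svA w | svB u == svB w].
Definition shchk t : bool := all (fun c => (c == esym t) || svsh (esym t) c) (Csym t).
Definition allchk2 : bool :=
  all (fun t => qchk t && shchk t) (iota 0 3) &&
  all (fun s => all (fun d => all (fun t => all (fun v => sdchk s d t v) (Qs t)) (iota 0 3))
     [:: false; true]) (iota 0 6).
Lemma allchk2_ok : allchk2.
Proof. vm_compute. reflexivity. Qed.

Lemma uniq_map_neq (T1 T2 : eqType) (f : T1 -> T2) (s : seq T1) x y :
  uniq (map f s) -> x \in s -> y \in s -> x != y -> f x != f y.
Proof.
elim: s => //= z s IH /andP[nz us]; rewrite !inE.
move=> /orP[/eqP->|xs] /orP[/eqP->|ys]; rewrite ?eqxx //.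
- by move=> _; apply: contra nz => /eqP ->; exact: map_f.
- by move=> _; apply: contra nz => /eqP <-; exact: map_f.
- exact: IH.
Qed.

Lemma btyp_lt3 n : (btyp n < 3)%N.
Proof. by do 5 (case: n => [|n] //). Qed.
Lemma otyp_lt3 n : (otyp n < 3)%N.
Proof. by do 5 (case: n => [|n] //). Qed.

Section Edge.
Variables (G : finZmodType) (a1 a2 : G).
Hypothesis Hnd : honeycomb_nondeg a1 a2.

Local Notation phi := (@phi G a1 a2).
Local Notation eval := (@eval G a1 a2).

Lemma NZ_ok w : w \in NZ -> phi w != 0.
Proof.
have HU : uniq (map (eval 0) L12).
  have := Hnd 0; congr (uniq _); rewrite map_cat; congr (_ ++ _); rewrite -map_comp;
  apply/eq_in_map => k; rewrite mem_iota => /andP[_ k6].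
  + by rewrite bgeoE /eval modn_small.
  + by rewrite ogeoE /eval modn_small.
case/mapP => -[u w']; rewrite mem_filter => /andP[/andP[uw /eqP t12] Hx] ->.
case/allpairsP: Hx => -[u1 w1] [uL wL E]; case: E => E1 E2; subst u1 w1.
have := @uniq_map_neq _ _ _ _ _ _ HU uL wL uw; apply: contra; rewrite phiB subr_eq0 => /eqP E.
by rewrite /eval E t12.
Qed.

Lemma sdecP g u w : sdec u w -> (eval g u == eval g w) = (u == w).
Proof.
case: (eqVneq u w) => [->|uw]; first by rewrite !eqxx.
rewrite /sdec (negbTE uw) /= => H; apply/negbTE.
rewrite /eval xpair_eqE negb_and; case/orP: H => [/andP[/andP[tt ut] wt]|/NZ_ok nz].
  apply/orP; right; apply: contra tt => /eqP /(congr1 val) /=.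
  by rewrite !inordK // => ->.
apply/orP; left; apply: contra nz; rewrite (inj_eq (addrI g)) phiB => /eqP->.
by rewrite subrr.
Qed.

Lemma mem_eval g u (S : seq sym) : all (sdec u) S ->
  (eval g u \in map (eval g) S) = (u \in S).
Proof.
elim: S => //= w S IH /andP[uw uS]; rewrite !inE IH // sdecP //.
Qed.

End Edge.

Lemma chk_of s d t v : (s < 6)%N -> (t < 3)%N -> v \in Qs t -> chkB s d t v && sdchk s d t v.
Proof.
move=> Hs Ht Hv; apply/andP; split.
  move/allP: allchkB_ok => /(_ s); rewrite mem_iota Hs => /(_ isT) /allP /(_ d).
  have -> : d \in [:: false; true] by case: d.
  move=> /(_ isT) /allP /(_ t); rewrite mem_iota Ht => /(_ isT) /allP; exact.
move/andP: allchk2_ok => [_] /allP /(_ s); rewrite mem_iota Hs => /(_ isT) /allP /(_ d).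
have -> : d \in [:: false; true] by case: d.
move=> /(_ isT) /allP /(_ t); rewrite mem_iota Ht => /(_ isT) /allP; exact.
Qed.

Lemma qchk_of t : (t < 3)%N -> qchk t && shchk t.
Proof.
move=> Ht; move/andP: allchk2_ok => [/allP /(_ t) + _]; rewrite mem_iota Ht; exact.
Qed.

Section Theta.
Variables (G : finZmodType) (a1 a2 : G) (s : 'I_6) (d : bool).
Local Notation bphase := (bphase a1 a2 s d).
Local Notation plaqsum := (plaqsum a1 a2 s d).
Local Notation alpha_p := (alpha_p a1 a2 s d).
Local Notation thetaP := (thetaP a1 a2 s d).

Lemma cadd0 (j : config G) : cadd j (plaqsum [::]) = j.
Proof. by apply: functional_extensionality => x; rewrite /cadd /plaqsum /= addbF. Qed.

Lemma cadd_plaq (j : config G) q X :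
  cadd j (plaqsum (q :: X)) = cadd (cadd j (alpha_p q)) (plaqsum X).
Proof.
apply: functional_extensionality => x; rewrite /cadd /plaqsum /= oddD oddb.
by rewrite addbA.
Qed.

Lemma caddA_plaq (j a : config G) q X :
  cadd (cadd j a) (plaqsum (q :: X)) = cadd (cadd (cadd j (alpha_p q)) a) (plaqsum X).
Proof.
apply: functional_extensionality => x; rewrite /cadd /plaqsum /= oddD oddb.
by rewrite !addbA (addbAC (j x) (a x)).
Qed.

Lemma bphase_neq0 p (j : config G) : bphase p j != 0.
Proof. by rewrite bphaseN expfz_neq0 // neq0Ci. Qed.

Lemma thetaP_nil P (j : config G) : thetaP P j [::] = 1.
Proof. by rewrite /thetaP big_ord0. Qed.

Lemma thetaP_cons P (j : config G) q S :
  thetaP P j (q :: S) = bphase q (cadd j (alpha_path P)) / bphase q j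
                        * thetaP P (cadd j (alpha_p q)) S.
Proof.
rewrite /thetaP big_ord_recl /= !cadd0; congr (_ * _).
apply: eq_bigr => k _ /=.
by rewrite caddA_plaq cadd_plaq.
Qed.

Lemma thetaP_nilP (j : config G) S : thetaP [::] j S = 1.
Proof.
rewrite /thetaP big1 // => k _.
have -> : cadd j (alpha_path [::]) = j.
  by apply: functional_extensionality => x; rewrite /cadd /alpha_path /= addbF.
by rewrite divff // bphase_neq0.
Qed.

Lemma thetaP_cat1 e P (j : config G) S :
  thetaP (e :: P) j S = thetaP [:: e] (cadd j (alpha_path P)) S * thetaP P j S.
Proof.
rewrite /thetaP -big_split; apply: eq_bigr => k _ /=.
have -> : cadd j (alpha_path (e :: P)) = cadd (cadd j (alpha_path P)) (alpha_path [:: e]).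
  apply: functional_extensionality => x; rewrite /cadd /alpha_path /= addn0 oddD oddb.
  by rewrite addbA addbAC.
by rewrite mulrA divfK // bphase_neq0.
Qed.

Lemma inConn1 e P x : inConn a1 a2 [:: e] x -> inConn a1 a2 (e :: P) x.
Proof. by rewrite /inConn /= orbF => ->. Qed.
Lemma inConn2 e P x : inConn a1 a2 P x -> inConn a1 a2 (e :: P) x.
Proof. by rewrite /inConn /= => ->; rewrite orbT. Qed.

End Theta.

Section Edge2.
Variables (G : finZmodType) (a1 a2 : G) (s : 'I_6) (d : bool).
Hypothesis Hnd : honeycomb_nondeg a1 a2.
Local Notation phi := (@phi G a1 a2).
Local Notation eval := (@eval G a1 a2).
Local Notation bphase := (bphase a1 a2 s d).
Local Notation bnd := (bnd a1 a2 s d).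
Local Notation outl := (outl a1 a2 s d).

Variables (g : G) (t : 'I_3).
Let e : edge G := (g, t).

Lemma eval_esym : eval g (esym t) = e.
Proof. by rewrite /eval /esym /phi /= !mulr0z !addr0 inord_val. Qed.

Definition Fe (j : config G) : nat := Fnat s d t (map (fun c => j (eval g c)) (Csym t)).

Lemma alpha1 x : alpha_path [:: e] x = (e == x).
Proof. by rewrite /alpha_path /= addn0 oddb. Qed.

Lemma KL2 q j : bphase q (cadd j (alpha_path [:: e])) * 'i ^+ Fe j =
                bphase q j * 'i ^+ Fe (cadd j (alpha_p a1 a2 s d q)).
Proof.
case: (boolP (has (fun v => q == g + phi v) (Qs t))) => [/hasP [v vQ /eqP ->] | hq].
  have /andP[Hc Hsd] := chk_of s d t v (ltn_ord s) (ltn_ord t) vQ.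
  move/andP: Hsd => [/allP Hsd1 /allP Hsd2].
  set rho := fun u => j (eval g u).
  have EN : map (fun L => cadd j (alpha_path [:: e]) (bnd (g + phi v) L)) (iota 1 6)
            = map (fun u => rho u (+) (esym t == u)) (NsymL s d v).
    rewrite /NsymL -map_comp; apply/eq_in_map => L LI /=.
    rewrite bnd_sym /cadd alpha1 -eval_esym sdecP //; apply: Hsd1.
    by rewrite mem_cat (map_f (sbnd s d v) LI).
  have EO : map (fun l => cadd j (alpha_path [:: e]) (outl (g + phi v) l)) (iota 7 6)
            = map (fun u => rho u (+) (esym t == u)) (OsymL s d v).
    rewrite /OsymL -map_comp; apply/eq_in_map => L LI /=.
    rewrite outl_sym /cadd alpha1 -eval_esym sdecP //; apply: Hsd1.
    by rewrite mem_cat (map_f (soutl s d v) LI) orbT.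
  have E0N : map (fun L => j (bnd (g + phi v) L)) (iota 1 6) = map rho (NsymL s d v).
    by rewrite /NsymL -map_comp; apply/eq_map => L /=; rewrite bnd_sym.
  have E0O : map (fun L => j (outl (g + phi v) L)) (iota 7 6) = map rho (OsymL s d v).
    by rewrite /OsymL -map_comp; apply/eq_map => L /=; rewrite outl_sym.
  have EC : map (fun c => cadd j (alpha_p a1 a2 s d (g + phi v)) (eval g c)) (Csym t)
            = map (fun c => rho c (+) (c \in NsymL s d v)) (Csym t).
    apply/eq_in_map => c cC /=; rewrite /cadd /alpha_p /bnds.
    have -> : [seq bnd (g + phi v) j0 | j0 <- iota 1 6] = map (eval g) (NsymL s d v).
      by rewrite /NsymL -map_comp; apply/eq_map => L /=; rewrite bnd_sym.
    by rewrite mem_eval //; apply: Hsd2.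
  rewrite !bphaseN /Fe EN EO E0N E0O EC.
  apply: mod4_mul; exact: (chkB_sound _ _ _ _ rho Hc).
have Hq : forall w, q = g + phi w -> w \in Qs t -> False.
  by move=> w Eq Hw; move/hasP: hq; apply; exists w => //; rewrite Eq.
have Hb : forall L, (e == bnd q L) = false.
  move=> L; apply/negP; rewrite bndE => /eqP [Eg Et].
  set n := (skidx s d (L + 5) %% 6)%N in Eg Et.
  have Hn : (n < 6)%N by rewrite ltn_pmod.
  have Ht : btyp n = t by rewrite Et inordK // btyp_lt3.
  apply: (Hq (vneg (boff n))).
    by rewrite phiN Eg addrK.
  rewrite /Qs mem_cat; apply/orP; left; apply: (map_f (fun n => vneg (boff n))).
  by rewrite mem_filter mem_iota Ht eqxx Hn.
have Ho : forall l, (e == outl q l) = false.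
  move=> l; apply/negP; rewrite outlE /= => /eqP [Eg Et].
  set n := (_ %% 6)%N in Eg Et.
  have Hn : (n < 6)%N by rewrite ltn_pmod.
  have Ht : otyp n = t by rewrite Et inordK // otyp_lt3.
  apply: (Hq (vneg (ooff n))).
    by rewrite phiN Eg addrK.
  rewrite /Qs mem_cat; apply/orP; right; apply: (map_f (fun n => vneg (ooff n))).
  by rewrite mem_filter mem_iota Ht eqxx Hn.
have EB : bphase q (cadd j (alpha_path [:: e])) = bphase q j.
  rewrite !bphaseN; congr ('i ^ EexpL _ _); apply/eq_map => L;
  by rewrite /cadd alpha1 ?Hb ?Ho addbF.
have EF : Fe (cadd j (alpha_p a1 a2 s d q)) = Fe j.
  rewrite /Fe; congr (Fnat _ _ _ _); apply/eq_in_map => c cC; rewrite /cadd /alpha_p.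
  have /andP[/allP Hqc _] := qchk_of t (ltn_ord t).
  have /andP[ct /allP Hqn] := Hqc c cC.
  case: (boolP (eval g c \in bnds a1 a2 s d q)) => [|_]; last by rewrite addbF.
  case/mapP => L _; rewrite bndE /eval => -[Eg Et].
  set n := (skidx s d (L + 5) %% 6)%N in Eg Et.
  have Hn : (n < 6)%N by rewrite ltn_pmod.
  have Ht : btyp n = c.2 by move: (congr1 val Et); rewrite /= !inordK // btyp_lt3.
  exfalso; apply: (Hq (vsub c.1 (boff n))).
    by rewrite phiB addrA Eg addrK.
  by have := Hqn n; rewrite mem_iota Hn Ht eqxx => /(_ isT).
by rewrite EB EF.
Qed.

Lemma theta1 j S : thetaP a1 a2 s d [:: e] j S = 'i ^+ Fe (cadd j (plaqsum a1 a2 s d S)) / 'i ^+ Fe j.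
Proof.
have nz : forall n, 'i ^+ n != 0 :> algC by move=> n; rewrite expf_neq0 // neq0Ci.
elim: S j => [|q S IH] j.
  by rewrite thetaP_nil cadd0 divff.
rewrite thetaP_cons IH cadd_plaq.
have K : bphase q (cadd j (alpha_path [:: e])) / bphase q j
         = 'i ^+ Fe (cadd j (alpha_p a1 a2 s d q)) / 'i ^+ Fe j.
  apply/eqP; rewrite eqr_div ?bphase_neq0 ?nz //; apply/eqP.
  by rewrite KL2 mulrC.
by rewrite K mulrC mulrA divfK.
Qed.

Lemma Cconn c : c \in Csym t -> inConn a1 a2 [:: e] (eval g c).
Proof.
move=> cC; have /andP[/allP Hq /allP Hs] := qchk_of t (ltn_ord t).
have /andP[ct _] := Hq c cC.
rewrite /inConn /= orbF -eval_esym.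
have Hed : forall u : sym, (u.2 < 3)%N -> edir a1 a2 (inord u.2 : 'I_3) = phi (dirv u.2).
  move=> u; rewrite /edir; case: u.2 => [|[|[|]]] //= ut; rewrite inordK //= /phi /=;
  by rewrite ?mulr0z ?mulr1z ?addr0 ?add0r.
have vBE : forall u, (u.2 < 3)%N -> vB a1 a2 (eval g u) = (g + phi (svB u).1, (svB u).2).
  by move=> u ut; rewrite /svB phiB addrA -Hed.
have vAE : forall u, vA (eval g u) = (g + phi (svA u).1, (svA u).2) by [].
have Hf : forall x y : vec * bool, x == y -> (g + phi x.1, x.2) == (g + phi y.1, y.2).
  by move=> x y /eqP ->.
case/orP: (Hs c cC) => [/eqP -> | H]; first by rewrite eqxx.
apply/orP; right; rewrite /share_vertex !vAE (vBE (esym t) (ltn_ord t)) (vBE c ct).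
case/or4P: H => /Hf E; apply/or4P; [constructor 1|constructor 2|constructor 3|constructor 4]; exact: E.
Qed.

Lemma theta1_local j j' S T :
  (forall x, inConn a1 a2 [:: e] x -> j x = j' x) ->
  (forall x, inConn a1 a2 [:: e] x -> plaqsum a1 a2 s d S x = plaqsum a1 a2 s d T x) ->
  thetaP a1 a2 s d [:: e] j S = thetaP a1 a2 s d [:: e] j' T.
Proof.
move=> Hj HS; rewrite !theta1.
have -> : Fe j = Fe j'.
  by rewrite /Fe; congr (Fnat _ _ _ _); apply/eq_in_map => c /Cconn /Hj.
have -> : Fe (cadd j (plaqsum a1 a2 s d S)) = Fe (cadd j' (plaqsum a1 a2 s d T)) => //.
rewrite /Fe; congr (Fnat _ _ _ _); apply/eq_in_map => c /Cconn H.
by rewrite /cadd (Hj _ H) (HS _ H).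
Qed.

End Edge2.


Theorem lemma3 (G : finZmodType) (a1 a2 : G)
  (Hgen : forall g : G, exists m n : nat, g = a1 *+ m + a2 *+ n)
  (Hnd : honeycomb_nondeg a1 a2)
  (s : 'I_6) (d : bool)
  (P : seq (edge G)) (HP : is_path a1 a2 P)
  (i i' : config G) (Hii' : forall e, inConn a1 a2 P e -> i e = i' e)
  (S T : seq G) (HS : uniq S) (HT : uniq T)
  (HSB : all (inBP a1 a2 s d P) S) (HTB : all (inBP a1 a2 s d P) T)
  (HST : forall e, inConn a1 a2 P e -> plaqsum a1 a2 s d S e = plaqsum a1 a2 s d T e) :
  thetaP a1 a2 s d P i S = thetaP a1 a2 s d P i' T.
Proof.
clear HP HS HT HSB HTB Hgen.
Time elim: P Hii' HST => [|e P IH] Hii' HST; first by rewrite !thetaP_nilP.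
rewrite [LHS]thetaP_cat1 [RHS]thetaP_cat1; congr (_ * _).
  case: e Hii' HST => g t Hii' HST.
  apply: (@theta1_local G a1 a2 s d Hnd g t) => x Hx.
    by rewrite /cadd Hii' //; apply: inConn1.
  by apply: HST; apply: inConn1.
by apply: IH => x Hx; [apply: Hii' | apply: HST]; apply: inConn2.
Qed.
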